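(* Consider the binary symmetric channel with a single error. Let $n\ge2$ and $1\le k\le n-1$, and suppose there is a single-error-correcting transmission strategy of length $n-1$ with $k-1$ feedbacks transmitting $M(n-1)$ messages. Let $$U(n)=2\left\lfloor\frac{2^n}{2(n+1)}\right\rfloor,\qquad r(n)=2^n-(n+1)U(n).$$ Then there is a single-error-correcting transmission strategy of length $n$ with $k$ feedbacks transmitting $M(n)$ messages, where $$M(n)=\begin{cases}2M(n-1) & \text{if } 2M(n-1)\le \frac{2^n}{n+1},\\ U(n) & \text{if } 2M(n-1)>\frac{2^n}{n+1}\text{ and } r(n)<2n,\\ U(n)+1 & \text{if } 2M(n-1)>\frac{2^n}{n+1}\text{ and } r(n)\ge 2n.\end{cases}$$
   Context: Binary symmetric channel: alphabet $\{0,1\}$, an error replaces a symbol by the other symbol; ''a single error'' means at most one error during the whole transmission. A strategy of length $n$ with $k$ feedbacks: $n=n_1+\cdots+n_{k+1}$; for a message $m\in[M]$, the first $n_1$ symbols depend only on $m$; after $N_{i-1}=n_1+\cdots+n_{i-1}$ symbols have been sent ($i\ge2$), the encoder knows (error-free, instantaneously) the $N_{i-1}$ received symbols, and the $i$th block of $n_i$ symbols is a function of $m$ and these received symbols. $k=0$ means no feedback. The strategy transmits $M$ messages with a single error if the sets of output sequences reachable from distinct messages with at most one error are pairwise disjoint. *)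

(* Defs.v *)
From mathcomp Require Import all_boot.
Set Implicit Arguments. Unset Strict Implicit. Unset Printing Implicit Defensive.

(* Block lengths ns = [:: n_1; ...; n_(k+1)].  fbpt ns t = N_(i-1), the number
   of symbols whose reception is known to the encoder when it sends the
   symbol of (0-based) index t, i.e. n_1 + ... + n_(i-1) where t lies in the
   i-th block. *)
Fixpoint fbpt (ns : seq nat) (t : nat) : nat :=
  match ns with
  | [::] => 0
  | a :: ns' => if a <= t then a + fbpt ns' (t - a) else 0
  end.

Definition valid_blocks (n k : nat) (ns : seq nat) : bool :=
  [&& size ns == k.+1, sumn ns == n & all (fun a => 0 < a) ns].

(* An encoder: the symbol of index t sent for message m, as a function of m,
   t and the prefix of received symbols known through feedback. *)
Definition encoder (M : nat) := 'I_M -> seq bool -> nat -> bool.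

Definition sent (M : nat) (ns : seq nat) (enc : encoder M) (m : 'I_M)
    (y : seq bool) : seq bool :=
  [seq enc m (take (fbpt ns t) y) t | t <- iota 0 (size y)].

Definition hamming (x y : seq bool) : nat :=
  count (fun p : bool * bool => p.1 != p.2) (zip x y).

Definition reachable (M : nat) (ns : seq nat) (enc : encoder M) (m : 'I_M)
    (y : seq bool) : Prop :=
  hamming (sent ns enc m y) y <= 1.

Definition corrects (n M : nat) (ns : seq nat) (enc : encoder M) : Prop :=
  forall (m1 m2 : 'I_M) (y : n.-tuple bool),
    reachable ns enc m1 y -> reachable ns enc m2 y -> m1 = m2.

Definition strategy_exists (n k M : nat) : Prop :=
  exists (ns : seq nat) (enc : encoder M), valid_blocks n k ns /\ corrects n ns enc.

Definition U (n : nat) : nat := 2 * (2 ^ n %/ (2 * n.+1)).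
Definition r (n : nat) : nat := 2 ^ n - n.+1 * U n.

(* M(n) as a function of n and M(n-1) = Mprev.
   "2 Mprev <= 2^n/(n+1)" is written 2 Mprev (n+1) <= 2^n. *)
Definition Mnext (n Mprev : nat) : nat :=
  if 2 * Mprev * n.+1 <= 2 ^ n then 2 * Mprev
  else if r n < 2 * n then U n else (U n).+1.

(* Main.v *)
Require Import Defs.
From mathcomp Require Import all_boot zify.
Set Implicit Arguments. Unset Strict Implicit.

Lemma fbpt_le ns t : fbpt ns t <= t.
Proof.
elim: ns t => [|a ns IH] t //=.
case: ifP => // Ha; by rewrite -{2}(subnKC Ha) leq_add2l IH.
Qed.

Definition Dv (ns : seq nat) (e : seq bool -> nat -> bool) (y : seq bool) :=
  [seq e (take (fbpt ns t) y) t != nth false y t | t <- iota 0 (size y)].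

Lemma hamming_D ns e y :
  hamming [seq e (take (fbpt ns t) y) t | t <- iota 0 (size y)] y = count id (Dv ns e y).
Proof.
have Hy : [seq nth false y t | t <- iota 0 (size y)] = y := mkseq_nth false y.
by rewrite /hamming -[X in zip _ X]Hy zip_map /Dv !count_map.
Qed.

Lemma size_Dv ns e y : size (Dv ns e y) = size y.
Proof. by rewrite size_map size_iota. Qed.

Lemma count0_nseq (s : seq bool) : count id s = 0 -> s = nseq (size s) false.
Proof. by elim: s => [|[] s IH] //= H; rewrite {1}IH. Qed.

Lemma count_index (s1 s2 : seq bool) : size s1 = size s2 -> count id s1 <= 1 ->
  count id s2 <= 1 -> index true s1 = index true s2 -> s1 = s2.
Proof.
elim: s1 s2 => [|b1 s1 IH] [|b2 s2] //= [Hs] C1 C2 I.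
case: b1 b2 C1 C2 I => [] [] //= C1 C2 I.
- rewrite add1n ltnS leqn0 in C1; rewrite add1n ltnS leqn0 in C2.
  by rewrite (count0_nseq (eqP C1)) (count0_nseq (eqP C2)) Hs.
- case: I => I; by rewrite (IH s2).
Qed.

Lemma causal ns e y1 y2 : size y1 = size y2 -> Dv ns e y1 = Dv ns e y2 -> y1 = y2.
Proof.
move=> Hs HD.
suff H : forall t, t <= size y1 -> take t y1 = take t y2.
  by rewrite -(take_size y1) H // Hs take_size.
elim=> [|t IH] Ht; first by rewrite !take0.
rewrite (take_nth false) // (take_nth false) -?Hs // IH ?(ltnW Ht) //; congr rcons.
have := congr1 (fun s => nth false s t) HD.
rewrite /Dv !(nth_map 0) ?size_iota -?Hs // nth_iota -?Hs //.
have Hf := fbpt_le ns t.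
rewrite -(take_takel y1 Hf) -(take_takel y2 Hf) IH ?(ltnW Ht) //.
by case: (e _ _); case: (nth false y1 t); case: (nth false y2 t).
Qed.

Definition reachb M ns (enc : encoder M) m (y : seq bool) : bool :=
  hamming (sent ns enc m y) y <= 1.

Lemma count_reach L c ns (enc : encoder c) :
  #|[set w : L.-tuple bool | [exists j, reachb ns enc j w]]| <= c * L.+1.
Proof.
case: c enc => [|c] enc.
  rewrite mul0n leqn0 cards_eq0; apply/eqP/setP => w; rewrite !inE.
  by apply/existsP => [[[j Hj]]].
pose phi (w : L.-tuple bool) : 'I_c.+1 * 'I_L.+1 :=
  let j := odflt ord0 [pick j | reachb ns enc j w] in
  (j, inord (index true (Dv ns (enc j) w))).
rewrite -(card_in_imset (f:=phi)).
  by apply: leq_trans (max_card _) _; rewrite card_prod !card_ord.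
move=> w1 w2; rewrite !inE => /existsP [j1 H1] /existsP [j2 H2].
rewrite /phi.
case: pickP => [k1 Hk1|/(_ j1)]; last by rewrite H1.
case: pickP => [k2 Hk2|/(_ j2)]; last by rewrite H2.
move=> /= [Ek Ei]; subst k2.
have Hz : forall w : L.-tuple bool, index true (Dv ns (enc k1) w) < L.+1.
  move=> w; have := index_size true (Dv ns (enc k1) w).
  by rewrite size_Dv size_tuple ltnS.
move/(congr1 val): Ei; rewrite /= !inordK // => Ei.
apply: val_inj; apply: (causal (ns:=ns) (e:=enc k1)); first by rewrite !size_tuple.
apply: count_index => //; first by rewrite !size_Dv !size_tuple.
- by rewrite -hamming_D.
- by rewrite -hamming_D.
Qed.

Definition Fset L ns c (enc : encoder c) : {set L.-tuple bool} :=
  ~: [set w : L.-tuple bool | [exists j, reachb ns enc j w]].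

Definition Fr L ns c (enc : encoder c) : seq (seq bool) :=
  [seq val w | w <- enum (Fset L ns enc)].

Lemma Fr_uniq L ns c (enc : encoder c) : uniq (Fr L ns enc).
Proof. by rewrite map_inj_uniq ?enum_uniq //; apply: val_inj. Qed.

Lemma Fr_size L ns c (enc : encoder c) : 2 ^ L - c * L.+1 <= size (Fr L ns enc).
Proof.
rewrite size_map -cardE /Fset.
have := cardsC [set w : L.-tuple bool | [exists j, reachb ns enc j w]].
rewrite card_tuple card_bool => <-.
have H := count_reach L ns enc. move: H. set X := #|_|. set Y := #|_|. move=> H. lia.
Qed.

Lemma Fr_mem L ns c (enc : encoder c) i : i < size (Fr L ns enc) ->
  size (nth [::] (Fr L ns enc) i) = L /\
  forall j, ~~ reachb ns enc j (nth [::] (Fr L ns enc) i).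
Proof.
move=> Hi; have := mem_nth [::] Hi.
move: (nth _ _ i) => w /mapP [x]; rewrite mem_enum !inE => Hx ->.
split; first exact: size_tuple.
by move=> j; apply: contra Hx => Hj; apply/existsP; exists j.
Qed.

Definition newenc L ns a b (eA : encoder a) (eB : encoder b) : encoder (a + b) :=
  fun m p t => match t with
  | 0 => if split m is inr _ then true else false
  | t'.+1 =>
     let y0 := head false p in let q := behead p in
     match split m with
     | inl i => if y0 then nth false (nth [::] (Fr L ns eB) i) t' else eA i q t'
     | inr j => if y0 then eB j q t' else nth false (nth [::] (Fr L ns eA) j) t'
     end
  end.

Lemma sent_new L ns a b (eA : encoder a) (eB : encoder b) m y0 y' :
  sent (1 :: ns) (newenc L ns eA eB) m (y0 :: y') =
  (if split m is inr _ then true else false) ::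
  [seq newenc L ns eA eB m (y0 :: take (fbpt ns t) y') t.+1 | t <- iota 0 (size y')].
Proof.
rewrite /sent /= -[1]addn0 iotaDl -map_comp; congr cons.
by apply: eq_map => t /=; rewrite add1n subn1 /=.
Qed.

Lemma hamming_cons x xs y ys : hamming (x :: xs) (y :: ys) = (x != y) + hamming xs ys.
Proof. by []. Qed.

Lemma hamming0 xs ys : size xs = size ys -> hamming xs ys = 0 -> xs = ys.
Proof.
elim: xs ys => [|x xs IH] [|y ys] //= [Hs].
rewrite hamming_cons; case: eqP => [->|] //= H; by rewrite (IH ys).
Qed.

Lemma map_nth_self (w : seq bool) n : size w = n ->
  [seq nth false w t | t <- iota 0 n] = w.
Proof. by move=> <-; apply: mkseq_nth. Qed.

Lemma reach_new L ns a b (eA : encoder a) (eB : encoder b) m y0 y' :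
  size y' = L -> a <= size (Fr L ns eB) -> b <= size (Fr L ns eA) ->
  reachb (1 :: ns) (newenc L ns eA eB) m (y0 :: y') ->
  match split m with
  | inl i => if y0 then nth [::] (Fr L ns eB) i = y' else is_true (reachb ns eA i y')
  | inr j => if y0 then is_true (reachb ns eB j y') else nth [::] (Fr L ns eA) j = y'
  end.
Proof.
move=> Hy HA HB; rewrite /reachb sent_new hamming_cons /newenc /=.
case: (split m) => [i|j]; case: y0 => /=.
- have [Hs _] := Fr_mem (leq_trans (ltn_ord i) HA).
  rewrite map_nth_self ?Hs // add1n ltnS leqn0 => /eqP H.
  by apply: hamming0 => //; rewrite Hs.
- by [].
- by [].
- have [Hs _] := Fr_mem (leq_trans (ltn_ord j) HB).
  rewrite map_nth_self ?Hs // add1n ltnS leqn0 => /eqP H.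
  by apply: hamming0 => //; rewrite Hs.
Qed.

Lemma Fr_inj L ns c (enc : encoder c) i j : i < size (Fr L ns enc) ->
  j < size (Fr L ns enc) -> nth [::] (Fr L ns enc) i = nth [::] (Fr L ns enc) j -> i = j.
Proof. by move=> Hi Hj E; apply/eqP; rewrite -(nth_uniq [::] Hi Hj (Fr_uniq L ns enc)) E. Qed.

Lemma Fr_nreach L ns c (enc : encoder c) i j y : i < size (Fr L ns enc) ->
  nth [::] (Fr L ns enc) i = y -> reachb ns enc j y -> False.
Proof. by move=> Hi <-; have [_ H] := Fr_mem Hi; move: (H j) => /negP. Qed.

Lemma new_corrects L ns a b (eA : encoder a) (eB : encoder b) :
  corrects L ns eA -> corrects L ns eB ->
  a <= size (Fr L ns eB) -> b <= size (Fr L ns eA) ->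
  corrects L.+1 (1 :: ns) (newenc L ns eA eB).
Proof.
move=> CA CB HA HB m1 m2 [[|y0 y'] Hy] //.
have Hy' : size y' = L by move/eqP: Hy => [].
pose yt : L.-tuple bool := @Tuple L bool y' (introT eqP Hy').
move=> R1 R2.
have := reach_new Hy' HA HB R1; have := reach_new Hy' HA HB R2.
move=> {R1 R2} H2 H1; apply: (can_inj splitK); move: H2 H1.
clear Hy; case: (split m1) => [i1|j1]; case: (split m2) => [i2|j2]; case: y0 => /=.
- move=> E2 E1; congr inl; apply: val_inj; apply: (Fr_inj (leq_trans (ltn_ord i1) HA) (leq_trans (ltn_ord i2) HA)).
  by rewrite E1 E2.
- by move=> R2 R1; rewrite (CA i1 i2 yt R1 R2).
- move=> R2 E1; case: (Fr_nreach (leq_trans (ltn_ord i1) HA) E1 R2).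
- move=> E2 R1; case: (Fr_nreach (leq_trans (ltn_ord j2) HB) E2 R1).
- move=> E2 R1; case: (Fr_nreach (leq_trans (ltn_ord i2) HA) E2 R1).
- move=> R2 E1; case: (Fr_nreach (leq_trans (ltn_ord j1) HB) E1 R2).
- by move=> R2 R1; rewrite (CB j1 j2 yt R1 R2).
- move=> E2 E1; congr inr; apply: val_inj; apply: (Fr_inj (leq_trans (ltn_ord j1) HB) (leq_trans (ltn_ord j2) HB)).
  by rewrite E1 E2.
Qed.

Lemma restrict L ns P c (h : c <= P) (enc : encoder P) :
  corrects L ns enc -> corrects L ns (fun j : 'I_c => enc (widen_ord h j)).
Proof.
move=> C m1 m2 y R1 R2; apply: val_inj.
by have /(congr1 val) := C _ _ y R1 R2.
Qed.

Lemma build L ns P a b (enc : encoder P) : corrects L ns enc -> a <= P -> b <= P ->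
  a * L.+1 + b <= 2 ^ L -> b * L.+1 + a <= 2 ^ L ->
  exists enc' : encoder (a + b), corrects L.+1 (1 :: ns) enc'.
Proof.
move=> C ha hb H1 H2.
pose eA := fun j : 'I_a => enc (widen_ord ha j).
pose eB := fun j : 'I_b => enc (widen_ord hb j).
exists (newenc L ns eA eB); apply: new_corrects; try exact: restrict.
- apply: leq_trans (Fr_size L ns eB); lia.
- apply: leq_trans (Fr_size L ns eA); lia.
Qed.

Theorem theorem2 (n k Mprev : nat) :
  2 <= n -> 1 <= k <= n - 1 ->
  strategy_exists (n - 1) (k - 1) Mprev ->
  strategy_exists n k (Mnext n Mprev).
Proof.
move=> Hn /andP[Hk1 Hk2] [ns [enc [Hv C]]].
case: n Hn Hk2 C Hv => [|L] // Hn Hk2 C Hv.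
rewrite subn1 /= in C Hv.
have Hv' : valid_blocks L.+1 k (1 :: ns).
  move/and3P: Hv => [/eqP Hs /eqP Hsum Hall]; apply/and3P; split => /=.
  - by rewrite Hs; apply/eqP; lia.
  - by rewrite Hsum add1n.
  - exact: Hall.
suff [e' C'] : exists e' : encoder (Mnext L.+1 Mprev), corrects L.+1 (1 :: ns) e'.
  by exists (1 :: ns), e'.
have Hu := leq_trunc_div (2 ^ L.+1) (2 * L.+2).
rewrite /Mnext /r /U; move: Hu; set u := 2 ^ L.+1 %/ (2 * L.+2).
rewrite expnS => Hu.
case: ifP => H1.
  rewrite mul2n -addnn; apply: build C _ _ _ _ => //; nia.
case: ifP => H2.
  rewrite mul2n -addnn; apply: build C _ _ _ _; nia.
rewrite mul2n -addnn -addSn; apply: build C _ _ _ _; nia.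
Qed.
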